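(* Let $M$ be a finite monoid such that for all $x,y\in M$, either $R(x)\subseteq R(xy)$ or $R(y)\subseteq R(xy)$. Then for all $x,y\in M$ there exists $k\ge1$ such that $(xy)^kx=x$ or $(yx)^ky=y$.
   Context: For $m$ in a monoid $M$, $R(m)=\{my: y\in M\}$ is the right ideal of $m$. *)

(* Defs.v *)
From mathcomp Require Import all_boot.
Set Implicit Arguments. Unset Strict Implicit. Unset Printing Implicit Defensive.

(* A finite monoid is given by a finite carrier T, a multiplication and a unit
   satisfying the monoid axioms (stated as explicit hypotheses in the theorem). *)

Definition right_ideal (T : finType) (mul : T -> T -> T) (m : T) : {set T} :=
  [set mul m y | y : T].

Fixpoint mpow (T : Type) (mul : T -> T -> T) (one : T) (x : T) (k : nat) : T :=
  match k with
  | 0 => one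
  | k'.+1 => mul x (mpow mul one x k')
  end.

(* Main.v *)
Require Import Defs.
From mathcomp Require Import all_boot.

Section S.
Variables (T : finType) (mul : T -> T -> T) (one : T).
Hypotheses (mulA : associative mul) (mul1x : left_id one mul) (mulx1 : right_id one mul).

Lemma mpowD p a b : mpow mul one p (a + b) = mul (mpow mul one p a) (mpow mul one p b).
Proof. elim: a => [|a IH] /=; first by rewrite mul1x. by rewrite IH mulA. Qed.

Lemma mpowSr p n : mpow mul one p n.+1 = mul (mpow mul one p n) p.
Proof. elim: n => [|n IH] /=; first by rewrite mulx1 mul1x. by rewrite -mulA -IH. Qed.

Lemma sub_ex a b : right_ideal mul a \subset right_ideal mul b -> exists t, a = mul b t.
Proof.
move/subsetP=> H; have : a \in right_ideal mul b.
  by apply: H; apply/imsetP; exists one => //; rewrite mulx1.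
by case/imsetP=> t _ ->; exists t.
Qed.

Lemma key x y
  (hR : forall x y : T,
      right_ideal mul x \subset right_ideal mul (mul x y) \/
      right_ideal mul y \subset right_ideal mul (mul x y)) :
  (exists z, x = mul (mul x y) z) ->
  exists k, 1 <= k /\ mul (mpow mul one (mul x y) k) x = x.
Proof.
case=> z Hz; set p := mul x y.
have P : forall n, exists t, x = mul (mpow mul one p n) t.
  elim=> [|n [t Ht]]; first by exists x; rewrite /= mul1x.
  have [u Hu] : exists u, x = mul (mul (mpow mul one p n) x) u.
    case: (hR (mpow mul one p n) x) => /sub_ex [s Hs].
    - by exists (mul s t); rewrite mulA -Hs.
    - by exists s.
  exists (mul z u).
  have -> : mpow mul one p n.+1 = mul (mpow mul one p n) p by exact: mpowSr.
  by rewrite [LHS]Hu mulA -(mulA _ p z) -Hz.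
pose f := fun i : 'I_(#|T|.+1) => mpow mul one p i.+1.
have : ~~ injectiveb f.
  apply/negP => /injectiveP inj; have := leq_card _ inj.
  by rewrite card_ord ltnn.
move/injectivePn => [i [j Hij Hf]].
wlog lt : i j Hij Hf / i < j.
  move=> W; case: (ltngtP i j) => h; first exact: W h.
  - by apply: (W j i) => //; rewrite eq_sym.
  - by move: Hij; rewrite (val_inj h) eqxx.
exists (j - i); split; first by rewrite subn_gt0.
have [t Ht] := P i.+1.
rewrite {2}Ht {1}Ht mulA -mpowD addnS subnK ?(ltnW lt) //.
by rewrite /f in Hf; rewrite -Hf.
Qed.
End S.

Theorem lemmaB2 (T : finType) (mul : T -> T -> T) (one : T)
  (mulA : associative mul) (mul1x : left_id one mul) (mulx1 : right_id one mul)
  (hR : forall x y : T,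
      right_ideal mul x \subset right_ideal mul (mul x y) \/
      right_ideal mul y \subset right_ideal mul (mul x y)) :
  forall x y : T, exists k : nat, 1 <= k /\
    (mul (mpow mul one (mul x y) k) x = x \/ mul (mpow mul one (mul y x) k) y = y).
Proof.
move=> x y.
have K1 : (exists z, x = mul (mul x y) z) -> exists k, 1 <= k /\
    (mul (mpow mul one (mul x y) k) x = x \/ mul (mpow mul one (mul y x) k) y = y).
  move=> H; have [k [h1 h2]] := @key T mul one mulA mul1x mulx1 x y hR H; by exists k; split; [|left].
have K2 : (exists z, y = mul (mul y x) z) -> exists k, 1 <= k /\
    (mul (mpow mul one (mul x y) k) x = x \/ mul (mpow mul one (mul y x) k) y = y).
  move=> H; have [k [h1 h2]] := @key T mul one mulA mul1x mulx1 y x hR H; by exists k; split; [|right].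
case: (hR x y) => /(@sub_ex T mul one mulx1 _ _); first exact: K1.
case=> a Ha; case: (hR y x) => /(@sub_ex T mul one mulx1 _ _); first exact: K2.
case=> b Hb; apply: K1.
(* x = (yx) b = y x b = (xy) a x b *)
exists (mul a (mul x b)); transitivity (mul (mul y x) b) => //.
by rewrite {1}Ha !mulA.
Qed.
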